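(* Let $p\ge 2$ be an integer and let $C_p(n)=\frac{(pn)!}{((p-1)n+1)!\,n!}=\frac{1}{(p-1)n+1}\binom{pn}{n}$ be the Fuss–Catalan numbers. Then the sequence $\{C_p(n)\}_{n\geq0}$ is infinitely log-monotonic.
   Context: For a sequence $\{z_n\}$ of positive numbers, define the operator $R\{z_n\}=\{z_{n+1}/z_n\}$. A sequence of positive numbers $\{x_n\}$ is log-convex if $x_{n-1}x_{n+1}\ge x_n^2$ and log-concave if $x_{n-1}x_{n+1}\le x_n^2$, for all indices where these terms are defined. A sequence $\{z_n\}$ is log-monotonic of order $k$ if for every odd $r\le k-1$ the sequence $R^r\{z_n\}$ is log-concave and for every even $r\le k-1$ (including $r=0$) the sequence $R^r\{z_n\}$ is log-convex. It is infinitely log-monotonic if it is log-monotonic of order $k$ for every integer $k\ge0$. *)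

(* Defs.v *)
From mathcomp Require Import all_boot all_order all_algebra.
Set Implicit Arguments. Unset Strict Implicit. Unset Printing Implicit Defensive.
Import Order.TTheory GRing.Theory Num.Theory.
Local Open Scope ring_scope.

Definition ratio_seq {R : realFieldType} (z : nat -> R) : nat -> R :=
  fun n => z n.+1 / z n.

(* log-convex: x_{n-1} x_{n+1} >= x_n^2 for all indices where defined
   (sequence indexed by n >= 0, so for all n >= 1). *)
Definition log_convex {R : realFieldType} (x : nat -> R) : Prop :=
  forall n : nat, x n.+1 ^+ 2 <= x n * x n.+2.

Definition log_concave {R : realFieldType} (x : nat -> R) : Prop :=
  forall n : nat, x n * x n.+2 <= x n.+1 ^+ 2.

Definition log_monotonic_order {R : realFieldType} (k : nat) (z : nat -> R) : Prop :=
  forall r : nat, (r < k)%N ->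
    (odd r -> log_concave (iter r ratio_seq z)) /\
    (~~ odd r -> log_convex (iter r ratio_seq z)).

Definition infinitely_log_monotonic {R : realFieldType} (z : nat -> R) : Prop :=
  forall k : nat, log_monotonic_order k z.

Definition fuss_catalan {R : realFieldType} (p n : nat) : R :=
  ((p * n)`!)%:R / ((((p - 1) * n).+1)`! * n`!)%:R.

(* Main.v *)
Require Import Defs.
From mathcomp Require Import all_boot all_order all_algebra.
From mathcomp Require Import ring lra zify.
From mathcomp Require Import all_classical all_reals all_analysis.
From mathcomp Require Import Rstruct Rstruct_topology.
Import Order.TTheory GRing.Theory Num.Theory numFieldNormedType.Exports.
Local Open Scope ring_scope.
Local Open Scope classical_set_scope.

Section Real.
Variable R : realType.

Definition Df (f : R -> R) : R -> R := fun x => f (x + 1) - f x.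

Lemma iter_Df_der k : forall s : R, 0 < s ->
  is_derive s 1 (iter k Df (@ln R)) (iter k Df (fun y => y^-1) s).
Proof.
elim: k => [|k IH] s s0 /=; first exact: is_derive1_ln.
have h1 : is_derive s 1 (iter k Df (@ln R) \o shift 1) (iter k Df (fun y => y^-1) (s + 1) * 1).
  apply: is_derive1_comp; last exact: is_derive_shift.
  by apply: IH; rewrite /shift /= addr_gt0.
rewrite mulr1 in h1.
have := is_deriveB h1 (IH s s0).
by [].
Qed.

Lemma iter_Df_inv k : forall s : R, 0 < s ->
  iter k Df (fun y => y^-1) s = (-1) ^+ k * (k`!)%:R / \prod_(i < k.+1) (s + i%:R).
Proof.
elim: k => [|k IH] s s0.
  by rewrite /= big_ord_recl big_ord0 addr0 mulr1 expr0 mul1r fact0 div1r.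
have pos : forall t : R, 0 < t -> forall m, 0 < \prod_(i < m) (t + i%:R).
  move=> t t0 m; apply: prodr_gt0 => i _; apply: ltr_wpDr => //.
have Hl : \prod_(i < k.+2) (s + i%:R) = s * \prod_(i < k.+1) (s + 1 + i%:R).
  rewrite big_ord_recl addr0; congr (_ * _); apply: eq_bigr => i _.
  by rewrite lift0 -addn1 natrD addrCA addrC.
have Hr : \prod_(i < k.+2) (s + i%:R) = \prod_(i < k.+1) (s + i%:R) * (s + k.+1%:R).
  by rewrite big_ord_recr.
rewrite /= /Df IH ?addr_gt0 // IH //.
set P1 := \prod_(i < k.+1) (s + 1 + i%:R) in Hl *.
set P0 := \prod_(i < k.+1) (s + i%:R) in Hr *.
have P1n : P1 != 0 by rewrite gt_eqF // pos // addr_gt0.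
have P0n : P0 != 0 by rewrite gt_eqF // pos.
have e : P1 = P0 * (s + k.+1%:R) / s by rewrite -Hr Hl mulrC mulKf // gt_eqF.
rewrite Hl e factS natrM exprS.
have sk : s + k.+1%:R != 0 by rewrite gt_eqF // ltr_wpDr.
rewrite -natr1.
field.
by rewrite P0n (gt_eqF s0) natr1 sk.
Qed.

Lemma sign_Df_inv k (s : R) : 0 < s -> 0 <= (-1) ^+ k * iter k Df (fun y => y^-1) s.
Proof.
move=> s0; rewrite iter_Df_inv // !mulrA -exprMn mulrNN mulr1 expr1n mul1r.
apply: divr_ge0 => //; apply: prodr_ge0 => i _; apply: addr_ge0 => //; exact: ltW.
Qed.

Lemma KL k (x a b : R) : 0 <= x -> 0 < a -> a <= b ->
  0 <= (-1) ^+ k * (iter k Df (@ln R) (b + x) - iter k Df (@ln R) (a + x)).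
Proof.
move=> x0 a0 ab.
set G := fun t => iter k Df (@ln R) (t + x).
have dG : forall t : R, 0 < t -> is_derive t 1 G (iter k Df (fun y => y^-1) (t + x) * 1).
  move=> t t0; rewrite /G.
  have -> : (fun t => iter k Df (@ln R) (t + x)) = iter k Df (@ln R) \o shift x by [].
  apply: is_derive1_comp; last exact: is_derive_shift.
  by apply: iter_Df_der; rewrite /shift /= ltr_wpDr.
have h1 : forall t, t \in `]a, b[%R -> is_derive t 1 G (iter k Df (fun y => y^-1) (t + x) * 1).
  move=> t tab; apply: dG; apply: lt_trans a0 _; by rewrite (itvP tab).
have h2 : {within `[a, b], continuous G}.
  apply: derivable_within_continuous => t tab.
  have : 0 < t by apply: lt_le_trans a0 _; rewrite (itvP tab).
  by move/dG => [].
have [c cab E] := @MVT_segment R G _ a b ab h1 h2.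
rewrite /G in E; rewrite E mulr1 mulrA; apply: mulr_ge0; last by rewrite subr_ge0.
apply: sign_Df_inv; apply: ltr_wpDr => //.
by apply: lt_le_trans a0 _; rewrite (itvP cab).
Qed.

Definition Ds (a : nat -> R) : nat -> R := fun n => a n.+1 - a n.

Lemma iter_Ds_shift (f : R -> R) (t : R) k n :
  iter k Ds (fun m => f (m%:R + t)) n = iter k Df f (n%:R + t).
Proof.
elim: k n => [|k IH] n //=.
rewrite /Ds /Df !IH; congr (_ - _); congr (iter k Df f _).
by rewrite -addn1 natrD addrAC.
Qed.

Lemma iter_Ds_ext (a b : nat -> R) k : a =1 b -> forall n, iter k Ds a n = iter k Ds b n.
Proof. by move=> ab; elim: k => [|k IH] n //=; rewrite /Ds !IH. Qed.

Lemma iter_Ds_add (a b : nat -> R) k n :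
  iter k Ds (fun m => a m + b m) n = iter k Ds a n + iter k Ds b n.
Proof.
elim: k n => [|k IH] n //=; rewrite /Ds !IH; lra.
Qed.

Lemma iter_Ds_opp (a : nat -> R) k n :
  iter k Ds (fun m => - a m) n = - iter k Ds a n.
Proof.
elim: k n => [|k IH] n //=; rewrite /Ds !IH; lra.
Qed.

Lemma iter_Ds_cst (c : R) k n : iter k.+1 Ds (fun => c) n = 0.
Proof.
elim: k n => [|k IH] n; first by rewrite /= /Ds subrr.
change (iter k.+1 Ds (fun=> c) n.+1 - iter k.+1 Ds (fun=> c) n = 0).
by rewrite !IH subrr.
Qed.

Lemma iter_Ds_sum m (F : nat -> nat -> R) k n :
  iter k Ds (fun j => \sum_(i < m) F i j) n = \sum_(i < m) iter k Ds (F i) n.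
Proof.
elim: m n => [|m IH] n.
  rewrite big_ord0 (@iter_Ds_ext _ (fun=> 0)) => [|j]; last by rewrite big_ord0.
  by case: k => // k; rewrite iter_Ds_cst.
rewrite big_ord_recr /= -IH -iter_Ds_add.
by apply: iter_Ds_ext => j; rewrite big_ord_recr.
Qed.

Lemma phi_sign k (a b : R) n : 0 < a -> a <= b ->
  0 <= (-1) ^+ k * iter k Ds (fun m => ln (m%:R + b) - ln (m%:R + a)) n.
Proof.
move=> a0 ab.
rewrite iter_Ds_add iter_Ds_opp (iter_Ds_shift (@ln R) b) (iter_Ds_shift (@ln R) a).
by rewrite ![n%:R + _]addrC; apply: KL.
Qed.

Lemma fact_add a b : ((a + b)`! = a`! * \prod_(i < b) (a + i.+1))%N.
Proof.
elim: b => [|b IH]; first by rewrite addn0 big_ord0 muln1.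
rewrite addnS factS IH big_ord_recr /= mulnCA; congr (_ * _)%N; by rewrite mulnC addnS.
Qed.

Variable m : nat.
Hypothesis m1 : (1 <= m)%N.
Definition zz n : R := fuss_catalan m.+1 n.

Lemma zz_gt0 n : 0 < zz n.
Proof.
rewrite /zz /fuss_catalan; apply: divr_gt0; by rewrite ltr0n ?muln_gt0 !fact_gt0.
Qed.

Lemma zz_ratio n :
  zz n.+1 * \prod_(i < m) ((m * n + i.+2)%N%:R : R) =
  zz n * m.+1%:R * \prod_(i < m) ((m.+1 * n + i.+1)%N%:R : R).
Proof.
rewrite /zz /fuss_catalan.
have -> : (m.+1 - 1 = m)%N by lia.
have e1 : (m.+1 * n.+1 = m.+1 * n + m.+1)%N by rewrite mulnS addnC.
have e2 : ((m * n.+1).+1 = (m * n).+1 + m)%N by rewrite mulnS; lia.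
rewrite e1 e2 (fact_add (m.+1 * n)) (fact_add (m * n).+1) [(n.+1)`!]factS big_ord_recr.
have e3 : \prod_(i < m) ((m * n).+1 + i.+1)%N = \prod_(i < m) (m * n + i.+2)%N.
  by apply: eq_bigr => i _; lia.
rewrite e3 !natrM !natr_prod.
set PA := \prod_(i < m) _ ; set PB := \prod_(i < m) _.
have -> : (m.+1 * n + (@ord_max m).+1 = m.+1 * n.+1)%N by rewrite /= mulnS; lia.
have PA0 : PA != 0 by rewrite gt_eqF // prodr_gt0 // => i _; rewrite ltr0n addnS.
rewrite natrM; field.
rewrite PA0 andbT; apply/and4P; split; rewrite gt_eqF //.
all: try by rewrite ltr0n fact_gt0.
all: try by rewrite ltr0n; exact: fact_gt0.
all: try by rewrite -natrM -natrD ltr0n.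
all: try by rewrite -natrD ltr0n.
Qed.



Lemma ln_prod (F : nat -> R) k : (forall i, 0 < F i) ->
  ln (\prod_(i < k) F i) = \sum_(i < k) ln (F i).
Proof.
move=> Fp; elim: k => [|k IH]; first by rewrite !big_ord0 ln1.
rewrite !big_ord_recr /= lnM ?IH // posrE //; exact: prodr_gt0.
Qed.

Definition al (i : nat) : R := i.+1%:R / m.+1%:R.
Definition be (i : nat) : R := i.+2%:R / m%:R.
Definition phi (i : nat) (n : nat) : R := ln (n%:R + be i) - ln (n%:R + al i).
Definition CC : R := ln m.+1%:R + \sum_(i < m) (ln m.+1%:R - ln m%:R).

Lemma m0 : (0 : R) < m%:R.
Proof. by rewrite ltr0n. Qed.

Lemma al_gt0 i : 0 < al i.
Proof. by rewrite /al divr_gt0 // ltr0n. Qed.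

Lemma al_le_be i : al i <= be i.
Proof.
rewrite /al /be ler_pdivrMr ?ltr0n // mulrAC ler_pdivlMr ?m0 // -!natrM ler_nat.
nia.
Qed.

Lemma Ds_lnzz n : Ds (fun k => ln (zz k)) n = CC + \sum_(i < m) - phi i n.
Proof.
have Hz := zz_ratio n.
have pA : forall i, (0 : R) < (m.+1 * n + i.+1)%N%:R by move=> i; rewrite ltr0n; lia.
have pB : forall i, (0 : R) < (m * n + i.+2)%N%:R by move=> i; rewrite ltr0n; lia.
have p0 : (0 : R) < m.+1%:R by rewrite ltr0n.
have PA0 : (0 : R) < \prod_(i < m) (m.+1 * n + i.+1)%N%:R by apply: prodr_gt0 => i _.
have PB0 : (0 : R) < \prod_(i < m) (m * n + i.+2)%N%:R by apply: prodr_gt0 => i _.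
have E : forall a b : R, 0 < a -> 0 < b ->
    a * \prod_(i < m) (m * n + i.+2)%N%:R = b * m.+1%:R * \prod_(i < m) (m.+1 * n + i.+1)%N%:R ->
    ln a + \sum_(i < m) ln (m * n + i.+2)%N%:R = ln b + ln m.+1%:R + \sum_(i < m) ln (m.+1 * n + i.+1)%N%:R.
  move=> a b a0 b0 H; have := congr1 (@ln R) H.
  rewrite !lnM ?posrE ?mulr_gt0 //.
  by rewrite (ln_prod (fun i => (m.+1 * n + i.+1)%N%:R)) // (ln_prod (fun i => (m * n + i.+2)%N%:R)).
have {}E := E _ _ (zz_gt0 n.+1) (zz_gt0 n) Hz.
rewrite /Ds /CC.
have -> : ln (zz n.+1) - ln (zz n) = ln m.+1%:R + \sum_(i < m) (ln (m.+1 * n + i.+1)%N%:R - ln (m * n + i.+2)%N%:R).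
  rewrite sumrB; lra.
rewrite -addrA -big_split /=; congr (_ + _); apply: eq_bigr => i _.
have eA : (m.+1 * n + i.+1)%N%:R = m.+1%:R * (n%:R + al i) :> R.
  rewrite /al mulrDr mulrCA divff ?mulr1 ?natrD ?natrM //.
  by rewrite [m.+1%:R]mulrS mulrDl mul1r.
have eB : (m * n + i.+2)%N%:R = m%:R * (n%:R + be i) :> R.
  rewrite /be mulrDr mulrCA divff ?mulr1 ?natrD ?natrM //; last by rewrite gt_eqF // m0.
have hA : 0 < n%:R + al i by apply: ltr_wpDl => //; exact: al_gt0.
have hB : 0 < n%:R + be i.
  apply: ltr_wpDl => //; apply: lt_le_trans (al_gt0 i) _; exact: al_le_be.
have hm : (0 : R) < m%:R by exact: m0.
rewrite eA eB !lnM ?posrE ?ltr0n //.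
rewrite /phi; lra.
Qed.

Lemma w_pos r n : 0 < iter r ratio_seq zz n.
Proof.
elim: r n => [|r IH] n /=; first exact: zz_gt0.
by rewrite /ratio_seq divr_gt0.
Qed.

Lemma ln_w r n : ln (iter r ratio_seq zz n) = iter r Ds (fun k => ln (zz k)) n.
Proof.
elim: r n => [|r IH] n //=.
by rewrite /ratio_seq /Ds ln_div ?posrE ?w_pos // !IH.
Qed.

Lemma D2_sign r n : 0 <= (-1) ^+ r * iter r.+2 Ds (fun k => ln (zz k)) n.
Proof.
rewrite iterSr (@iter_Ds_ext _ (fun j => CC + \sum_(i < m) - phi i j)); last exact: Ds_lnzz.
rewrite iter_Ds_add iter_Ds_cst add0r (iter_Ds_sum m (fun i j => - phi i j)) mulr_sumr.
apply: sumr_ge0 => i _; rewrite iter_Ds_opp mulrN -mulNr -mulN1r -exprS.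
apply: phi_sign; [exact: al_gt0 | exact: al_le_be].
Qed.

Lemma main_real r n :
  (odd r -> iter r ratio_seq zz n * iter r ratio_seq zz n.+2 <= iter r ratio_seq zz n.+1 ^+ 2) /\
  (~~ odd r -> iter r ratio_seq zz n.+1 ^+ 2 <= iter r ratio_seq zz n * iter r ratio_seq zz n.+2).
Proof.
have H := D2_sign r n.
have e : iter r.+2 Ds (fun k => ln (zz k)) n =
  ln (iter r ratio_seq zz n.+2) - ln (iter r ratio_seq zz n.+1) -
  (ln (iter r ratio_seq zz n.+1) - ln (iter r ratio_seq zz n)) by rewrite !ln_w.
rewrite e in H.
have p0 := w_pos r n; have p1 := w_pos r n.+1; have p2 := w_pos r n.+2.
split => ho.
- rewrite -(ler_ln (R := R)) ?posrE ?mulr_gt0 ?exprn_gt0 // lnM ?posrE // (lnXn 2 p1) mulr2n.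
  rewrite -signr_odd ho expr1 in H; lra.
- rewrite -(ler_ln (R := R)) ?posrE ?mulr_gt0 ?exprn_gt0 // lnM ?posrE // lnM ?posrE //.
  rewrite -signr_odd (negbTE ho) expr0 in H; lra.
Qed.

End Real.

Lemma ratr_iter (F : realFieldType) q r n :
  iter r ratio_seq (fun n => @fuss_catalan F q n) n =
  ratr (iter r ratio_seq (fun n => @fuss_catalan rat q n) n).
Proof.
elim: r n => [|r IH] n /=.
  by rewrite /fuss_catalan fmorph_div !rmorph_nat.
by rewrite /ratio_seq !IH fmorph_div.
Qed.

Theorem corollary3p4 (R : realFieldType) (p : nat) (hp : (2 <= p)%N) :
  infinitely_log_monotonic (fun n : nat => @fuss_catalan R p n).
Proof.
have [m Hm] : exists m, p = m.+1 by exists p.-1; lia.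
subst p; have m1 : (1 <= m)%N by lia.
move=> k r _; split => ho n.
- have := (@main_real Rdefinitions.R _ m1 r n).1 ho.
  rewrite /zz !(ratr_iter Rdefinitions.R) -!rmorphM -rmorphXn ler_rat => H.
  by rewrite !(ratr_iter R) -!rmorphM -rmorphXn ler_rat.
- have := (@main_real Rdefinitions.R _ m1 r n).2 ho.
  rewrite /zz !(ratr_iter Rdefinitions.R) -!rmorphM -rmorphXn ler_rat => H.
  by rewrite !(ratr_iter R) -!rmorphM -rmorphXn ler_rat.
Qed.
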